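(* For all $r,t>0$ the function $z\mapsto u(z;r,t)$, $z\in\left[0,\frac{Q(r)P(r)d}{Q(t)P(t)}\right]$, is the profile of a rotationally symmetric hypersurface of constant mean curvature $\eta(t)=\frac{nQ(t)P(t)}{d}$, i.e. $H(u(\cdot;r,t))\equiv\eta(t)$ on this interval, and moreover \[ u_z(0;r,t)=u_z\!\left(\tfrac{Q(r)P(r)d}{Q(t)P(t)};r,t\right)=0 . \]
   Context: Fix an integer $n\ge2$ and $d>0$. Define $Q:(0,\infty)\to\mathbb{R}$ by $Q(t)=\frac{1-t^{n-1}}{1-t^n}$ for $t\neq1$ and $Q(1)=\frac{n-1}{n}$. For $0\le x\le1$, $t>0$ define $R(x;t)=\frac{1}{|1-t|}\sqrt{\left(\frac{(1-(1-t)x)^{n-1}}{1-Q(t)+Q(t)(1-(1-t)x)^n}\right)^2-1}$ for $t\ne1$ and $R(x;1)=\sqrt{(n-1)(1-x)x}$. Let $\zeta(x;t)=\int_x^1R(\tilde x;t)^{-1}\,d\tilde x$ for $0\le x<1$, $\zeta(1;t)=0$, $P(t)=\zeta(0;t)$, and let $\zeta^{-1}(\cdot;t)$ denote the inverse of $x\mapsto\zeta(x;t)$ (so $\zeta^{-1}(\zeta(x;t);t)=x$). For $r,t>0$ and $z\in\left[0,\frac{Q(r)P(r)d}{Q(t)P(t)}\right]$ set $u(z;r,t)=\frac{Q(r)d}{P(t)Q(t)}\left(1-(1-r)\zeta^{-1}\left(\frac{Q(t)P(t)z}{Q(r)d};r\right)\right)$, and let $\eta(t)=\frac{nQ(t)P(t)}{d}$.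 Subscripts denote partial derivatives. For a positive $C^2$ function $f$ of $z$, the mean curvature of the hypersurface of revolution $\{(z,f(z)\theta):\theta\in\mathbb{S}^{n-1}\}\subset\mathbb{R}^{n+1}$ is $H(f)=\frac{-f_{zz}}{(1+f_z^2)^{3/2}}+\frac{n-1}{f\sqrt{1+f_z^2}}$. *)

(* Defs.v *)
From Stdlib Require Import Reals Lra ClassicalEpsilon.
Open Scope R_scope.

Definition Qf (n : nat) (t : R) : R :=
  if Req_EM_T t 1 then INR (n - 1) / INR n
  else (1 - t ^ (n - 1)) / (1 - t ^ n).

Definition Rprof (n : nat) (x t : R) : R :=
  if Req_EM_T t 1 then sqrt (INR (n - 1) * (1 - x) * x)
  else / Rabs (1 - t) *
       sqrt ((((1 - (1 - t) * x) ^ (n - 1)) /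
              (1 - Qf n t + Qf n t * (1 - (1 - t) * x) ^ n)) ^ 2 - 1).

Definition improper_integral (f : R -> R) (a b l : R) : Prop :=
  forall eps, 0 < eps -> exists delta, 0 < delta /\
    forall a' b', a < a' < a + delta -> b - delta < b' < b -> a' <= b' ->
      exists pr : Riemann_integrable f a' b', Rabs (RiemannInt pr - l) < eps.

Definition zeta (n : nat) (x t : R) : R :=
  if Rlt_dec x 1 then
    epsilon (inhabits 0) (fun l => improper_integral (fun y => / Rprof n y t) x 1 l)
  else 0.

Definition Pf (n : nat) (t : R) : R := zeta n 0 t.

Definition zeta_inv (n : nat) (s t : R) : R :=
  epsilon (inhabits 0) (fun x => 0 <= x <= 1 /\ zeta n x t = s).

Definition u (n : nat) (d z r t : R) : R :=
  Qf n r * d / (Pf n t * Qf n t) *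
  (1 - (1 - r) * zeta_inv n (Qf n t * Pf n t * z / (Qf n r * d)) r).

Definition eta (n : nat) (d t : R) : R := INR n * Qf n t * Pf n t / d.

(* mean curvature H(f) at a point, given f, f_z, f_zz there;
   (1+f_z^2)^(3/2) written as sqrt(1+f_z^2)^3 *)
Definition Hcurv (n : nat) (f f1 f2 : R) : R :=
  - f2 / (sqrt (1 + f1 ^ 2)) ^ 3 + INR (n - 1) / (f * sqrt (1 + f1 ^ 2)).

Definition deriv_within (a b : R) (g : R -> R) (l x : R) : Prop :=
  forall eps, 0 < eps -> exists delta, 0 < delta /\
    forall h, h <> 0 -> Rabs h < delta -> a <= x + h <= b ->
      Rabs ((g (x + h) - g x) / h - l) < eps.

(* Main.v *)
Require Import Defs.
From Stdlib Require Import Reals Lra Lia ClassicalEpsilon FunctionalExtensionality.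
From Coquelicot Require Import Coquelicot.
Open Scope R_scope.


Definition cw (a b : R) (g : R -> R) (x : R) : Prop :=
  forall eps, 0 < eps -> exists delta, 0 < delta /\
    forall y, a <= y <= b -> Rabs (y - x) < delta -> Rabs (g y - g x) < eps.

Definition clamp (a b s : R) : R := Rmax a (Rmin b s).

Lemma clamp_in a b s : a <= b -> a <= clamp a b s <= b.
Proof. intros; unfold clamp, Rmax, Rmin; repeat destruct Rle_dec; lra. Qed.

Lemma clamp_id a b s : a <= s <= b -> clamp a b s = s.
Proof. intros; unfold clamp, Rmax, Rmin; repeat destruct Rle_dec; lra. Qed.

Lemma clamp_lip a b s1 s2 : a <= b ->
  Rabs (clamp a b s1 - clamp a b s2) <= Rabs (s1 - s2).
Proof.
  intros; unfold clamp, Rmax, Rmin, Rabs;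
  repeat destruct Rle_dec; repeat destruct Rcase_abs; lra.
Qed.

Lemma cont_pt_eps f x :
  (forall eps, 0 < eps -> exists delta, 0 < delta /\
     forall y, Rabs (y - x) < delta -> Rabs (f y - f x) < eps) ->
  continuity_pt f x.
Proof.
  intros H eps Heps. destruct (H eps Heps) as [d [Hd Hd']].
  exists d; split; auto. intros y [_ Hy]. apply Hd'. exact Hy.
Qed.

Lemma cont_pt_use f x : continuity_pt f x ->
  forall eps, 0 < eps -> exists delta, 0 < delta /\
     forall y, Rabs (y - x) < delta -> Rabs (f y - f x) < eps.
Proof.
  intros H eps Heps. destruct (H eps Heps) as [d [Hd Hd']].
  exists d; split; auto. intros y Hy.
  destruct (Req_dec y x) as [->|Hne].
  - rewrite Rminus_diag, Rabs_R0; auto.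
  - apply Hd'. split; auto. split; auto. exact I.
Qed.

Lemma cw_clamp_cont a b g : a <= b -> (forall x, a <= x <= b -> cw a b g x) ->
  forall x, continuity_pt (fun s => g (clamp a b s)) x.
Proof.
  intros Hab Hcw x. apply cont_pt_eps. intros eps Heps.
  destruct (Hcw (clamp a b x) (clamp_in a b x Hab) eps Heps) as [d [Hd H]].
  exists d; split; auto. intros y Hy. apply H. apply clamp_in; auto.
  eapply Rle_lt_trans. apply clamp_lip; auto. auto.
Qed.

Lemma cont_cw a b g x : continuity_pt g x -> cw a b g x.
Proof.
  intros H eps Heps. destruct (cont_pt_use g x H eps Heps) as [d [Hd H']].
  exists d; split; auto.
Qed.

Lemma cw_comp_cont a b g phi x : cw a b g x -> continuity_pt phi (g x) ->
  cw a b (fun s => phi (g s)) x.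
Proof.
  intros Hg Hp eps Heps. destruct (cont_pt_use phi (g x) Hp eps Heps) as [d1 [Hd1 H1]].
  destruct (Hg d1 Hd1) as [d2 [Hd2 H2]]. exists d2; split; auto.
Qed.

Lemma cw_lin a b a' b' g k x : 0 < k -> a' = a / k -> b' = b / k ->
  cw a b g (k * x) -> cw a' b' (fun s => g (k * s)) x.
Proof.
  intros Hk -> -> Hg eps Heps. destruct (Hg eps Heps) as [d [Hd H]].
  exists (d / k); split. apply Rdiv_lt_0_compat; auto.
  intros y Hy Hyx. apply H.
  - destruct Hy as [H1 H2]. split.
    + apply (Rmult_le_compat_l k) in H1; [|lra]. field_simplify in H1; lra.
    + apply (Rmult_le_compat_l k) in H2; [|lra]. field_simplify in H2; lra.
  - replace (k * y - k * x) with (k * (y - x)) by ring.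
    rewrite Rabs_mult, (Rabs_right k) by lra.
    apply (Rmult_lt_compat_l k) in Hyx; auto. field_simplify in Hyx; lra.
Qed.

Lemma ext_deriv a b g k : a < b -> (forall x, a <= x <= b -> cw a b g x) ->
  (forall x, a < x < b -> derivable_pt_lim g x (k x)) ->
  (forall x, a <= x <= b -> cw a b k x) ->
  forall x, a <= x <= b -> deriv_within a b g (k x) x.
Proof.
  intros Hab Hg Hd Hk x Hx eps Heps.
  destruct (Hk x Hx eps Heps) as [del [Hdel H]].
  exists del; split; auto. intros h Hh0 Hh Hxh.
  set (gc := fun s => g (clamp a b s)).
  destruct (MVT_gen gc x (x+h) k) as [c [Hc Heq]].
  - intros y Hy.
    assert (Hy' : a < y < b).
    { unfold Rmin, Rmax in Hy; destruct Rle_dec; lra. }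
    apply is_derive_ext_loc with g.
    + apply locally_interval with (Finite a) (Finite b); simpl; try lra.
      intros z Hz1 Hz2. unfold gc. rewrite clamp_id; auto; split; lra.
    + apply is_derive_Reals, Hd; auto.
  - intros y Hy. apply cw_clamp_cont; [lra | exact Hg].
  - unfold gc in Heq. rewrite (clamp_id a b x Hx), (clamp_id a b (x+h) Hxh) in Heq.
    replace ((g (x+h) - g x)/h) with (k c).
    2:{ rewrite Heq. field. auto. }
    apply H.
    + unfold Rmin, Rmax in Hc; destruct Rle_dec; lra.
    + unfold Rmin, Rmax in Hc; destruct Rle_dec;
      revert Hh; unfold Rabs; repeat destruct Rcase_abs; lra.
Qed.


Lemma cpf f x : continuity_pt f x <-> continuous f x.
Proof. apply continuity_pt_filterlim. Qed.

Lemma abs_lt x a : Rabs x < a -> - a < x < a.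
Proof. unfold Rabs; destruct Rcase_abs; lra. Qed.

Lemma asin_cont1 : continuity_pt asin 1.
Proof.
  apply cont_pt_eps. intros eps Heps.
  set (e := Rmin eps (PI/2)).
  assert (He : 0 < e) by (unfold e, Rmin; destruct Rle_dec; pose proof PI_RGT_0; lra).
  assert (He2 : e <= PI/2) by (unfold e, Rmin; destruct Rle_dec; lra).
  assert (He3 : e <= eps) by (unfold e, Rmin; destruct Rle_dec; lra).
  set (m := sin (PI/2 - e)).
  assert (Hm : m < 1).
  { unfold m; rewrite <- sin_PI2. apply sin_increasing_1; lra. }
  exists (1 - m); split; [lra|]. intros y Hy.
  rewrite asin_1.
  destruct (Rle_dec 1 y).
  - unfold asin. destruct (Rle_dec y (-1)); [lra|]. destruct (Rle_dec 1 y); [|lra].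
    rewrite Rminus_diag, Rabs_R0; lra.
  - assert (Hy1 : m < y < 1).
    { revert Hy; unfold Rabs; destruct Rcase_abs; lra. }
    assert (Hm0 : 0 <= m).
    { unfold m. apply sin_ge_0; pose proof PI_RGT_0; lra. }
    pose proof (asin_bound y) as [Hb1 Hb2].
    assert (PI/2 - e < asin y).
    { apply sin_increasing_0; try lra.
      rewrite sin_asin by lra. fold m. lra. }
    unfold Rabs; destruct Rcase_abs; lra.
Qed.

Lemma asin_cont y : 0 <= y <= 1 -> continuity_pt asin y.
Proof.
  intros Hy. destruct (Req_dec y 1) as [->|Hne]. apply asin_cont1.
  apply derivable_continuous_pt, derivable_pt_asin; lra.
Qed.

Lemma asin_deriv y : -1 < y < 1 -> derivable_pt_lim asin y (1 / sqrt (1 - y²)).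
Proof.
  intros Hy. rewrite <- (derive_pt_asin y Hy).
  destruct (derivable_pt_asin y Hy) as [l Hl] eqn:E. simpl. exact Hl.
Qed.

Lemma quot_est A q y e : 0 < e -> Rabs y < 1/2 -> Rabs (q - A) < e/4 ->
  Rabs y < e / (4 * (Rabs A + 1)) -> Rabs (q / (1 - y) - A) < e.
Proof.
  intros He Hy Hq Hy2.
  assert (H1 : 1/2 < 1 - y) by (apply abs_lt in Hy; lra).
  replace (q / (1 - y) - A) with ((q - A + A * y) * / (1 - y)) by (field; lra).
  rewrite Rabs_mult, Rabs_inv, (Rabs_right (1 - y)) by lra.
  assert (H2 : Rabs (q - A + A * y) <= Rabs (q - A) + Rabs A * Rabs y).
  { rewrite <- Rabs_mult. apply Rabs_triang. }
  assert (H3 : Rabs A * Rabs y <= e / 4).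
  { pose proof (Rabs_pos A). pose proof (Rabs_pos y).
    apply Rle_trans with (Rabs A * (e / (4 * (Rabs A + 1)))).
    apply Rmult_le_compat_l; lra.
    apply Rmult_le_reg_r with (4 * (Rabs A + 1)). nra.
    field_simplify; [|lra]. nra. }
  assert (H4 : / (1 - y) < 2).
  { apply Rmult_lt_reg_r with (1 - y). lra. field_simplify; lra. }
  pose proof (Rabs_pos (q - A + A * y)).
  assert (/ (1 - y) > 0) by (apply Rinv_0_lt_compat; lra).
  nra.
Qed.

Definition Gf (F F' : R -> R) (x : R) : R :=
  if Req_EM_T x 0 then F' 0 else if Req_EM_T x 1 then - F' 1
  else F x / (x * (1 - x)).

Lemma cont_ext_loc f g x r : 0 < r -> (forall y, Rabs (y - x) < r -> f y = g y) ->
  continuity_pt g x -> continuity_pt f x.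
Proof.
  intros Hr Heq Hg. apply cont_pt_eps. intros eps Heps.
  destruct (cont_pt_use g x Hg eps Heps) as [d [Hd H]].
  exists (Rmin d r); split. apply Rmin_pos; auto.
  intros y Hy. rewrite (Heq y), (Heq x). apply H.
  eapply Rlt_le_trans; [exact Hy| apply Rmin_l].
  rewrite Rminus_diag, Rabs_R0; auto.
  eapply Rlt_le_trans; [exact Hy| apply Rmin_r].
Qed.

Lemma dpl_cont f x l : derivable_pt_lim f x l -> continuity_pt f x.
Proof. intros H. apply derivable_continuous_pt. exists l; exact H. Qed.

Section G.
Variables F F' : R -> R.
Hypothesis HF : forall x, 0 <= x <= 1 -> derivable_pt_lim F x (F' x).
Hypothesis F0 : F 0 = 0.
Hypothesis F1 : F 1 = 0.
Hypothesis D0 : 0 < F' 0.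
Hypothesis D1 : F' 1 < 0.
Hypothesis Fpos : forall x, 0 < x < 1 -> 0 < F x.

Lemma Gf_in x : 0 < x < 1 -> Gf F F' x = F x / (x * (1 - x)).
Proof.
  intros Hx; unfold Gf; destruct Req_EM_T; [lra|]; destruct Req_EM_T; [lra|]; auto.
Qed.

Lemma Gf_pos x : 0 <= x <= 1 -> 0 < Gf F F' x.
Proof.
  intros Hx; unfold Gf; destruct Req_EM_T; [lra|]; destruct Req_EM_T; [lra|].
  apply Rdiv_lt_0_compat. apply Fpos; lra. nra.
Qed.

Lemma Gf_cont x : 0 <= x <= 1 -> continuity_pt (Gf F F') x.
Proof.
  intros Hx.
  destruct (Req_dec x 0) as [->|H0]; [|destruct (Req_dec x 1) as [->|H1]].
  - apply cont_pt_eps. intros eps Heps.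
    destruct (HF 0 ltac:(lra) (eps/4) ltac:(lra)) as [del Hdel].
    pose proof (cond_pos del).
    assert (0 < eps / (4 * (Rabs (F' 0) + 1))).
    { apply Rdiv_lt_0_compat; auto. pose proof (Rabs_pos (F' 0)); lra. }
    exists (Rmin (1/2) (Rmin del (eps / (4 * (Rabs (F' 0) + 1))))).
    split. repeat apply Rmin_pos; lra.
    intros y Hy. rewrite Rminus_0_r in Hy.
    pose proof (Rmin_l (1/2) (Rmin del (eps / (4 * (Rabs (F' 0) + 1))))).
    pose proof (Rmin_r (1/2) (Rmin del (eps / (4 * (Rabs (F' 0) + 1))))).
    pose proof (Rmin_l del (eps / (4 * (Rabs (F' 0) + 1)))).
    pose proof (Rmin_r del (eps / (4 * (Rabs (F' 0) + 1)))).
    destruct (Req_dec y 0) as [->|Hy0].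
    + rewrite Rminus_diag, Rabs_R0; lra.
    + assert (Hy1 : y <> 1) by (apply abs_lt in Hy; lra).
      unfold Gf. destruct Req_EM_T; [lra|]. destruct Req_EM_T; [lra|].
      destruct Req_EM_T; [|lra].
      replace (F y / (y * (1 - y))) with ((F y / y) / (1 - y)) by (field; split; lra).
      apply quot_est; auto; try lra.
      pose proof (Hdel y Hy0 ltac:(lra)) as Hd.
      rewrite Rplus_0_l, F0, Rminus_0_r in Hd. exact Hd.
  - apply cont_pt_eps. intros eps Heps.
    destruct (HF 1 ltac:(lra) (eps/4) ltac:(lra)) as [del Hdel].
    pose proof (cond_pos del).
    assert (0 < eps / (4 * (Rabs (F' 1) + 1))).
    { apply Rdiv_lt_0_compat; auto. pose proof (Rabs_pos (F' 1)); lra. }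
    exists (Rmin (1/2) (Rmin del (eps / (4 * (Rabs (F' 1) + 1))))).
    split. repeat apply Rmin_pos; lra.
    intros y Hy.
    pose proof (Rmin_l (1/2) (Rmin del (eps / (4 * (Rabs (F' 1) + 1))))).
    pose proof (Rmin_r (1/2) (Rmin del (eps / (4 * (Rabs (F' 1) + 1))))).
    pose proof (Rmin_l del (eps / (4 * (Rabs (F' 1) + 1)))).
    pose proof (Rmin_r del (eps / (4 * (Rabs (F' 1) + 1)))).
    destruct (Req_dec y 1) as [->|Hy1].
    + rewrite Rminus_diag, Rabs_R0; lra.
    + assert (Hy0 : y <> 0) by (apply abs_lt in Hy; lra).
      unfold Gf. destruct Req_EM_T; [lra|]. destruct Req_EM_T; [lra|].
      destruct Req_EM_T; [lra|]. destruct Req_EM_T; [|lra].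
      set (h := y - 1).
      assert (Hh : h <> 0) by (unfold h; lra).
      replace (F y / (y * (1 - y)) - - F' 1) with
        (- (((F (1 + h) - F 1) / h) / (1 - - h) - F' 1)).
      2:{ unfold h. rewrite F1. replace (1 + (y - 1)) with y by ring. field. split; lra. }
      rewrite Rabs_Ropp. apply quot_est; auto.
      * rewrite Rabs_Ropp. unfold h; lra.
      * apply Hdel; auto. unfold h; lra.
      * rewrite Rabs_Ropp. unfold h; lra.
  - apply cont_ext_loc with (fun y => F y / (y * (1 - y))) (Rmin x (1 - x)).
    + apply Rmin_pos; lra.
    + intros y Hy. pose proof (Rmin_l x (1-x)). pose proof (Rmin_r x (1-x)).
      apply Gf_in. revert Hy; unfold Rabs; destruct Rcase_abs; lra.
    + apply cpf. apply (continuous_mult F (fun y => / (y * (1 - y)))).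
      * apply cpf. apply dpl_cont with (F' x). apply HF; lra.
      * apply continuous_Rinv_comp.
        2: { apply Rmult_integral_contrapositive; split; lra. }
        apply (continuous_mult (fun y => y) (fun y => 1 - y)).
        apply continuous_id.
        apply (continuous_minus (fun _ => 1) (fun y => y)).
        apply continuous_const. apply continuous_id.
Qed.

End G.


Definition Psi (F F' : R -> R) (th : R) : R := 2 * / sqrt (Gf F F' (sin th ^ 2)).
Definition Phi (F F' : R -> R) (th : R) : R := RInt (Psi F F') th (PI / 2).
Definition Zf (F F' : R -> R) (x : R) : R := Phi F F' (asin (sqrt x)).

Lemma sin2_in th : 0 <= sin th ^ 2 <= 1.
Proof.
  pose proof (SIN_bound th). split. apply pow2_ge_0.
  simpl. nra.
Qed.

Section Z.
Variables F F' : R -> R.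
Hypothesis HF : forall x, 0 <= x <= 1 -> derivable_pt_lim F x (F' x).
Hypothesis F0 : F 0 = 0.
Hypothesis F1 : F 1 = 0.
Hypothesis D0 : 0 < F' 0.
Hypothesis D1 : F' 1 < 0.
Hypothesis Fpos : forall x, 0 < x < 1 -> 0 < F x.

Lemma Psi_cont th : continuous (Psi F F') th.
Proof.
  unfold Psi. apply (continuous_mult (fun _ => 2) (fun th => / sqrt (Gf F F' (sin th ^ 2)))).
  apply continuous_const.
  apply continuous_Rinv_comp.
  2:{ apply Rgt_not_eq, sqrt_lt_R0, Gf_pos; auto. apply sin2_in. }
  apply continuous_sqrt_comp.
  apply (continuous_comp (fun th => sin th ^ 2) (Gf F F')).
  apply (ex_derive_continuous (K := R_AbsRing) (V := R_NormedModule)). auto_derive. auto.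
  apply cpf. apply Gf_cont; auto. apply sin2_in.
Qed.

Lemma Psi_pos th : 0 < Psi F F' th.
Proof.
  unfold Psi. apply Rmult_lt_0_compat. lra. apply Rinv_0_lt_compat.
  apply sqrt_lt_R0, Gf_pos; auto. apply sin2_in.
Qed.

Lemma Phi_deriv th : is_derive (Phi F F') th (- Psi F F' th).
Proof.
  apply (is_derive_RInt' (Psi F F') (Phi F F') th (PI/2)).
  - exists (mkposreal 1 Rlt_0_1). intros a _. unfold Phi.
    apply (RInt_correct (V := R_CompleteNormedModule)). apply (ex_RInt_continuous (V := R_CompleteNormedModule)). intros; apply Psi_cont.
  - apply Psi_cont.
Qed.

Lemma Phi_cont th : continuity_pt (Phi F F') th.
Proof.
  apply dpl_cont with (- Psi F F' th). apply is_derive_Reals, Phi_deriv.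
Qed.

Lemma Zf_cont x : 0 <= x <= 1 -> continuity_pt (Zf F F') x.
Proof.
  intros Hx. unfold Zf.
  apply (continuity_pt_comp (fun x => asin (sqrt x)) (Phi F F')).
  apply (continuity_pt_comp sqrt asin).
  apply continuity_pt_sqrt; lra.
  apply asin_cont. split. apply sqrt_pos. rewrite <- sqrt_1. apply sqrt_le_1_alt; lra.
  apply Phi_cont.
Qed.

Lemma Zf_1 : Zf F F' 1 = 0.
Proof. unfold Zf, Phi. rewrite sqrt_1, asin_1. apply (RInt_point (V := R_CompleteNormedModule)). Qed.

Lemma Zf_deriv x : 0 < x < 1 -> derivable_pt_lim (Zf F F') x (- / sqrt (F x)).
Proof.
  intros Hx.
  assert (Hs : 0 < sqrt x < 1).
  { split. apply sqrt_lt_R0; lra. rewrite <- sqrt_1. apply sqrt_lt_1_alt; lra. }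
  assert (H1 := derivable_pt_lim_sqrt x ltac:(lra)).
  assert (H2 := asin_deriv (sqrt x) ltac:(lra)).
  assert (H3 := proj1 (is_derive_Reals _ _ _) (Phi_deriv (asin (sqrt x)))).
  assert (H4 := derivable_pt_lim_comp _ _ _ _ _ H1 H2).
  assert (H5 := derivable_pt_lim_comp _ _ _ _ _ H4 H3).
  unfold Zf. unfold comp in H5.
  replace (- / sqrt (F x)) with
    (- Psi F F' (asin (sqrt x)) * (1 / sqrt (1 - (sqrt x)²) * / (2 * sqrt x))).
  exact H5.
  unfold Psi. rewrite sin_asin by lra.
  replace (sqrt x ^ 2) with x by (rewrite pow2_sqrt; lra).
  replace ((sqrt x)²) with x by (rewrite Rsqr_sqrt; lra).
  rewrite Gf_in by lra.
  assert (HFx := Fpos x Hx).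
  rewrite sqrt_div_alt by nra.
  rewrite sqrt_mult by lra.
  assert (0 < sqrt (F x)) by (apply sqrt_lt_R0; lra).
  assert (0 < sqrt (1 - x)) by (apply sqrt_lt_R0; lra).
  field. repeat split; lra.
Qed.

Lemma Zf_int a b : 0 < a -> a <= b -> b < 1 ->
  is_RInt (fun y => / sqrt (F y)) a b (Zf F F' a - Zf F F' b).
Proof.
  intros Ha Hab Hb.
  assert (H := is_RInt_derive (fun y => - Zf F F' y) (fun y => / sqrt (F y)) a b).
  replace (Zf F F' a - Zf F F' b) with (minus (- Zf F F' b) (- Zf F F' a)).
  2:{ unfold minus, plus, opp; simpl. ring. }
  apply H.
  - intros x Hx. rewrite Rmin_left, Rmax_right in Hx by lra.
    apply is_derive_Reals.
    replace (/ sqrt (F x)) with (- (- / sqrt (F x))) by ring.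
    apply (derivable_pt_lim_opp (Zf F F')). apply Zf_deriv; lra.
  - intros x Hx. rewrite Rmin_left, Rmax_right in Hx by lra.
    apply continuous_Rinv_comp.
    apply continuous_sqrt_comp. apply cpf. apply dpl_cont with (F' x). apply HF; lra.
    apply Rgt_not_eq, sqrt_lt_R0, Fpos; lra.
Qed.

Lemma Zf_improper x : 0 <= x < 1 ->
  improper_integral (fun y => / sqrt (F y)) x 1 (Zf F F' x).
Proof.
  intros Hx eps Heps.
  destruct (cont_pt_use _ _ (Zf_cont x ltac:(lra)) (eps/2) ltac:(lra)) as [d1 [Hd1 H1]].
  destruct (cont_pt_use _ _ (Zf_cont 1 ltac:(lra)) (eps/2) ltac:(lra)) as [d2 [Hd2 H2]].
  exists (Rmin d1 d2); split. apply Rmin_pos; auto.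
  intros a' b' Ha Hb Hab.
  pose proof (Rmin_l d1 d2). pose proof (Rmin_r d1 d2).
  assert (HI := Zf_int a' b' ltac:(lra) Hab ltac:(lra)).
  exists (ex_RInt_Reals_0 _ _ _ (ex_intro _ _ HI)).
  rewrite <- RInt_Reals. rewrite (is_RInt_unique _ _ _ _ HI).
  specialize (H1 a' ltac:(apply Rabs_def1; lra)).
  specialize (H2 b' ltac:(apply Rabs_def1; lra)).
  rewrite Zf_1 in H2. rewrite Rminus_0_r in H2.
  apply abs_lt in H1. apply abs_lt in H2. apply Rabs_def1; lra.
Qed.

End Z.


Lemma improper_unique f x l1 l2 : x < 1 ->
  improper_integral f x 1 l1 -> improper_integral f x 1 l2 -> l1 = l2.
Proof.
  intros Hx H1 H2.
  destruct (Req_dec l1 l2) as [E|Hne]; auto. exfalso.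
  set (e := Rabs (l1 - l2) / 2).
  assert (He : 0 < e) by (unfold e; apply Rdiv_lt_0_compat; [apply Rabs_pos_lt; lra| lra]).
  destruct (H1 e He) as [d1 [Hd1 K1]]. destruct (H2 e He) as [d2 [Hd2 K2]].
  set (d := Rmin (Rmin d1 d2) (1 - x)).
  assert (Hd : 0 < d) by (unfold d; repeat apply Rmin_pos; lra).
  pose proof (Rmin_l (Rmin d1 d2) (1 - x)). pose proof (Rmin_r (Rmin d1 d2) (1 - x)).
  pose proof (Rmin_l d1 d2). pose proof (Rmin_r d1 d2). fold d in H, H0.
  destruct (K1 (x + d/3) (1 - d/3)) as [p1 Q1]; try split; try lra.
  destruct (K2 (x + d/3) (1 - d/3)) as [p2 Q2]; try split; try lra.
  rewrite (RiemannInt_P5 p1 p2) in Q1.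
  apply abs_lt in Q1. apply abs_lt in Q2.
  unfold e in *. revert Q1 Q2. unfold Rabs; destruct Rcase_abs; lra.
Qed.

Section Mono.
Variables F F' : R -> R.
Hypothesis HF : forall x, 0 <= x <= 1 -> derivable_pt_lim F x (F' x).
Hypothesis F0 : F 0 = 0.
Hypothesis F1 : F 1 = 0.
Hypothesis D0 : 0 < F' 0.
Hypothesis D1 : F' 1 < 0.
Hypothesis Fpos : forall x, 0 < x < 1 -> 0 < F x.

Lemma Zf_mvt x1 x2 : 0 <= x1 < x2 -> x2 <= 1 ->
  exists c, x1 <= c <= x2 /\ Zf F F' x2 - Zf F F' x1 = - / sqrt (F c) * (x2 - x1).
Proof.
  intros H1 H2.
  destruct (MVT_gen (Zf F F') x1 x2 (fun c => - / sqrt (F c))) as [c [Hc E]].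
  - intros x Hx. rewrite Rmin_left, Rmax_right in Hx by lra.
    apply is_derive_Reals, Zf_deriv; auto; lra.
  - intros x Hx. rewrite Rmin_left, Rmax_right in Hx by lra.
    apply Zf_cont; auto; lra.
  - rewrite Rmin_left, Rmax_right in Hc by lra. exists c; auto.
Qed.

Lemma Zf_le x1 x2 : 0 <= x1 <= x2 -> x2 <= 1 -> Zf F F' x2 <= Zf F F' x1.
Proof.
  intros H1 H2. destruct (Req_dec x1 x2) as [->|Hne]; [lra|].
  destruct (Zf_mvt x1 x2) as [c [Hc E]]; try lra.
  assert (0 <= / sqrt (F c)).
  { destruct (Req_dec (sqrt (F c)) 0) as [E0|E0].
    rewrite E0, Rinv_0; lra. apply Rlt_le, Rinv_0_lt_compat.
    pose proof (sqrt_pos (F c)); lra. }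
  nra.
Qed.

Lemma Zf_lt x1 x2 : 0 <= x1 < x2 -> x2 <= 1 -> Zf F F' x2 < Zf F F' x1.
Proof.
  intros H1 H2.
  set (p := x1 + (x2 - x1)/3). set (q := x1 + 2 * (x2 - x1)/3).
  destruct (Zf_mvt p q) as [c [Hc E]]; [unfold p, q; lra | unfold p, q; lra |].
  unfold p, q in *.
  assert (0 < / sqrt (F c)).
  { apply Rinv_0_lt_compat, sqrt_lt_R0, Fpos; lra. }
  pose proof (Zf_le x1 p). pose proof (Zf_le q x2). unfold p, q in *.
  assert (0 < / sqrt (F c) * (x2 - x1)) by (apply Rmult_lt_0_compat; lra).
  assert (Zf F F' (x1 + 2 * (x2 - x1) / 3) < Zf F F' (x1 + (x2 - x1) / 3)).
  { assert (E' : Zf F F' (x1 + 2 * (x2 - x1) / 3) - Zf F F' (x1 + (x2 - x1) / 3)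
      = - (/ sqrt (F c) * (x2 - x1)) / 3) by (rewrite E; field; apply Rgt_not_eq, sqrt_lt_R0, Fpos; lra).
    lra. }
  assert (Zf F F' x2 <= Zf F F' (x1 + 2 * (x2 - x1) / 3)) by (apply Zf_le; lra).
  assert (Zf F F' (x1 + (x2 - x1) / 3) <= Zf F F' x1) by (apply Zf_le; lra).
  lra.
Qed.

Lemma Zf_0_pos : 0 < Zf F F' 0.
Proof. pose proof (Zf_lt 0 1) as H. rewrite Zf_1 in H. apply H; lra. Qed.

Lemma zeta_eq n t : (forall y, Rprof n y t = sqrt (F y)) ->
  forall x, 0 <= x <= 1 -> zeta n x t = Zf F F' x.
Proof.
  intros HR x Hx. unfold zeta. destruct Rlt_dec as [Hlt|Hge].
  - assert (E : (fun y => / Rprof n y t) = (fun y => / sqrt (F y))).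
    { apply functional_extensionality; intros y; rewrite HR; auto. }
    rewrite E.
    assert (HP := Zf_improper F F' HF F0 F1 D0 D1 Fpos x ltac:(lra)).
    apply (improper_unique (fun y => / sqrt (F y)) x); auto.
    apply (epsilon_spec (inhabits 0) (fun l => improper_integral (fun y => / sqrt (F y)) x 1 l)).
    exists (Zf F F' x); auto.
  - assert (x = 1) by lra. subst. rewrite Zf_1; auto.
Qed.

End Mono.

Lemma inv_est D q e1 eps : D < 0 -> 0 < eps -> e1 <= - D / 2 -> e1 <= eps * D ^ 2 / 2 ->
  Rabs (q - D) < e1 -> Rabs (/ q - / D) < eps.
Proof.
  intros HD He H1 H2 Hq. apply abs_lt in Hq.
  assert (Hq0 : q < D / 2) by lra.
  assert (HqD : D ^ 2 / 2 < q * D) by nra.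
  replace (/ q - / D) with ((D - q) * / (q * D)) by (field; split; lra).
  rewrite Rabs_mult, (Rabs_right (/ (q * D))).
  2:{ apply Rle_ge, Rlt_le, Rinv_0_lt_compat; nra. }
  assert (Rabs (D - q) < e1) by (apply Rabs_def1; lra).
  assert (0 < / (q * D)) by (apply Rinv_0_lt_compat; nra).
  assert (/ (q * D) < 2 / D ^ 2).
  { apply Rmult_lt_reg_r with (q * D * D ^ 2). nra.
    field_simplify; try nra. }
  pose proof (Rabs_pos (D - q)).
  apply Rlt_le_trans with (e1 * / (q * D)).
  apply Rmult_lt_compat_r; lra.
  apply Rle_trans with (e1 * (2 / D ^ 2)).
  apply Rmult_le_compat_l; lra.
  apply Rmult_le_reg_r with (D ^ 2). nra.
  field_simplify; try nra.
Qed.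


Lemma Z_surj (Z : R -> R) : (forall x, 0 <= x <= 1 -> continuity_pt Z x) ->
  Z 1 = 0 -> 0 <= Z 0 -> forall s, 0 <= s <= Z 0 -> exists x, 0 <= x <= 1 /\ Z x = s.
Proof.
  intros Zc Z1 HZ0 s Hs.
  assert (Hc : continuity (fun y => Z (clamp 0 1 y))).
  { intros y. apply cw_clamp_cont; [lra|]. intros; apply cont_cw, Zc; auto. }
  destruct (IVT_gen _ 0 1 s Hc) as [x [Hx E]].
  - rewrite !clamp_id by lra. rewrite Z1, Rmin_right, Rmax_left; lra.
  - rewrite Rmin_left, Rmax_right in Hx by lra. rewrite clamp_id in E by lra.
    exists x; split; auto.
Qed.

Section Inv.
Variables Z X : R -> R.
Variable P : R.
Hypothesis Zc : forall x, 0 <= x <= 1 -> continuity_pt Z x.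
Hypothesis Zlt : forall x1 x2, 0 <= x1 < x2 -> x2 <= 1 -> Z x2 < Z x1.
Hypothesis Z1 : Z 1 = 0.
Hypothesis HP : P = Z 0.
Hypothesis HX : forall s, 0 <= s <= P -> 0 <= X s <= 1 /\ Z (X s) = s.

Lemma Zle x1 x2 : 0 <= x1 <= x2 -> x2 <= 1 -> Z x2 <= Z x1.
Proof.
  intros. destruct (Req_dec x1 x2) as [->|]; [lra|]. apply Rlt_le, Zlt; lra.
Qed.

Lemma Zrange x : 0 <= x <= 1 -> 0 <= Z x <= P.
Proof.
  intros. rewrite HP. split. rewrite <- Z1. apply Zle; lra. apply Zle; lra.
Qed.

Lemma X_Z x : 0 <= x <= 1 -> X (Z x) = x.
Proof.
  intros Hx. destruct (HX (Z x) (Zrange x Hx)) as [H1 H2].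
  destruct (Rtotal_order (X (Z x)) x) as [Hl|[He|Hg]]; auto.
  - pose proof (Zlt (X (Z x)) x ltac:(lra) ltac:(lra)). lra.
  - pose proof (Zlt x (X (Z x)) ltac:(lra) ltac:(lra)). lra.
Qed.

Lemma X_0 : X 0 = 1.
Proof. rewrite <- Z1. apply X_Z; lra. Qed.

Lemma X_P : X P = 0.
Proof. rewrite HP. apply X_Z; lra. Qed.

Lemma P_pos : 0 < P.
Proof. rewrite HP, <- Z1. apply Zlt; lra. Qed.

Lemma X_int s : 0 < s < P -> 0 < X s < 1.
Proof.
  intros Hs. destruct (HX s ltac:(lra)) as [H1 H2].
  split.
  - destruct (Req_dec (X s) 0) as [E|E]; [|lra].
    rewrite E, <- HP in H2. lra.
  - destruct (Req_dec (X s) 1) as [E|E]; [|lra].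
    rewrite E, Z1 in H2. lra.
Qed.

Lemma X_cw s0 : 0 <= s0 <= P -> cw 0 P X s0.
Proof.
  intros Hs0 eps Heps.
  destruct (HX s0 Hs0) as [Hx0 E0].
  set (x0 := X s0) in *. set (e := eps / 2).
  assert (He : 0 < e) by (unfold e; lra).
  assert (Hd1 : exists d1, 0 < d1 /\ (x0 + e <= 1 -> d1 = s0 - Z (x0 + e))).
  { destruct (Rle_dec (x0 + e) 1).
    - exists (s0 - Z (x0 + e)). split; auto. rewrite <- E0.
      pose proof (Zlt x0 (x0 + e) ltac:(lra) r). lra.
    - exists 1. split; [lra|]. intros; lra. }
  assert (Hd2 : exists d2, 0 < d2 /\ (0 <= x0 - e -> d2 = Z (x0 - e) - s0)).
  { destruct (Rle_dec 0 (x0 - e)).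
    - exists (Z (x0 - e) - s0). split; auto. rewrite <- E0.
      pose proof (Zlt (x0 - e) x0 ltac:(lra) ltac:(lra)). lra.
    - exists 1. split; [lra|]. intros; lra. }
  destruct Hd1 as [d1 [Hd1 Ed1]]. destruct Hd2 as [d2 [Hd2 Ed2]].
  exists (Rmin d1 d2). split. apply Rmin_pos; auto.
  intros s Hs Hss. pose proof (Rmin_l d1 d2). pose proof (Rmin_r d1 d2).
  apply abs_lt in Hss.
  destruct (HX s Hs) as [Hx E].
  assert (A1 : X s < x0 + e).
  { destruct (Rlt_dec (X s) (x0 + e)) as [|Hn]; auto. exfalso.
    destruct (Rle_dec (x0 + e) 1) as [Hr|Hr]; [|lra].
    pose proof (Zle (x0 + e) (X s) ltac:(lra) ltac:(lra)).
    specialize (Ed1 Hr). lra. }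
  assert (A2 : x0 - e < X s).
  { destruct (Rlt_dec (x0 - e) (X s)) as [|Hn]; auto. exfalso.
    destruct (Rle_dec 0 (x0 - e)) as [Hr|Hr]; [|lra].
    pose proof (Zle (X s) (x0 - e) ltac:(lra) ltac:(lra)).
    specialize (Ed2 Hr). lra. }
  apply Rabs_def1; unfold e in *; lra.
Qed.

Lemma X_deriv s Dz : 0 < s < P -> derivable_pt_lim Z (X s) Dz -> Dz < 0 ->
  derivable_pt_lim X s (/ Dz).
Proof.
  intros Hs HZ HD eps Heps.
  set (e1 := Rmin (- Dz / 2) (eps * Dz ^ 2 / 2)).
  assert (He1 : 0 < e1).
  { unfold e1. apply Rmin_pos. lra. apply Rmult_lt_0_compat; [|lra].
    apply Rmult_lt_0_compat; auto. nra. }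
  destruct (HZ e1 He1) as [d1 Hd1].
  destruct (X_cw s ltac:(lra) d1 (cond_pos d1)) as [d2 [Hd2 Hc]].
  assert (Hd : 0 < Rmin d2 (Rmin s (P - s))) by (repeat apply Rmin_pos; lra).
  exists (mkposreal _ Hd). intros h Hh0 Hh. simpl in Hh.
  pose proof (Rmin_l d2 (Rmin s (P - s))). pose proof (Rmin_r d2 (Rmin s (P - s))).
  pose proof (Rmin_l s (P - s)). pose proof (Rmin_r s (P - s)).
  apply abs_lt in Hh as Hh'.
  destruct (HX (s + h) ltac:(lra)) as [_ Eh].
  destruct (HX s ltac:(lra)) as [_ Es].
  set (k := X (s + h) - X s).
  assert (Hk0 : k <> 0).
  { intros E. unfold k in E. assert (X (s + h) = X s) by lra.
    rewrite H3 in Eh. lra. }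
  assert (Hk : Rabs k < d1).
  { apply Hc. lra. replace (s + h - s) with h by ring. lra. }
  specialize (Hd1 k Hk0 Hk).
  replace (X s + k) with (X (s + h)) in Hd1 by (unfold k; ring).
  rewrite Eh, Es in Hd1.
  change (Rabs (k / h - / Dz) < eps).
  replace (k / h) with (/ ((s + h - s) / k)).
  2:{ field. split; auto. }
  apply (inv_est Dz _ e1); auto.
  apply Rmin_l. apply Rmin_r.
Qed.

End Inv.


Lemma pow_pos' t k : 0 < t -> 0 < t ^ k.
Proof. intros; apply pow_lt; auto. Qed.

Lemma pow_lt1 t k : 0 < t < 1 -> t ^ (S k) < 1.
Proof.
  intros Ht. induction k. simpl; lra.
  change (t ^ S (S k)) with (t * t ^ (S k)).
  pose proof (pow_pos' t (S k) ltac:(lra)). nra.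
Qed.

Lemma pow_gt1 t k : 1 < t -> 1 < t ^ (S k).
Proof.
  intros Ht. induction k. simpl; lra.
  change (t ^ S (S k)) with (t * t ^ (S k)). nra.
Qed.

Lemma sgn_pow t k : 0 < t -> t <> 1 -> 0 < (1 - t) * (1 - t ^ (S k)).
Proof.
  intros H0 H1. destruct (Rlt_dec t 1).
  - pose proof (pow_lt1 t k ltac:(lra)). nra.
  - pose proof (pow_gt1 t k ltac:(lra)). nra.
Qed.

Lemma sgn_pow_le t k : 0 < t -> 0 <= (1 - t) * (1 - t ^ k).
Proof.
  intros H0. destruct k. simpl; lra.
  destruct (Req_dec t 1) as [->|H1]. rewrite pow1; lra.
  apply Rlt_le, sgn_pow; auto.
Qed.

Lemma phi_pos t k : 0 < t -> t <> 1 ->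
  0 < 1 - INR (k + 2) * t ^ (k + 1) + INR (k + 1) * t ^ (k + 2).
Proof.
  intros H0 H1. induction k.
  - simpl. assert (0 < (1 - t) * (1 - t)).
    { apply Rsqr_pos_lt. lra. }
    nra.
  - set (T := t ^ (k + 1)). set (N := INR (k + 1)).
    assert (E1 : t ^ (S k + 1) = t * T) by (unfold T; replace (S k + 1)%nat with (S (k + 1)) by lia; reflexivity).
    assert (E2 : t ^ (S k + 2) = t * t * T) by (unfold T; replace (S k + 2)%nat with (S (S (k + 1))) by lia; simpl; ring).
    assert (E3 : t ^ (k + 2) = t * T) by (unfold T; replace (k + 2)%nat with (S (k + 1)) by lia; reflexivity).
    assert (E4 : INR (S k + 2) = N + 2) by (unfold N; replace (S k + 2)%nat with (S (S (k + 1))) by lia; rewrite !S_INR; ring).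
    assert (E5 : INR (S k + 1) = N + 1) by (unfold N; replace (S k + 1)%nat with (S (k + 1)) by lia; rewrite !S_INR; ring).
    assert (E6 : INR (k + 2) = N + 1) by (unfold N; replace (k + 2)%nat with (S (k + 1)) by lia; rewrite !S_INR; ring).
    rewrite E1, E2, E4, E5. rewrite E3, E6 in IHk.
    assert (HT : 0 < T) by (apply pow_pos'; auto).
    assert (HN : 0 <= N) by apply pos_INR.
    assert (0 <= (N + 1) * T * ((1 - t) * (1 - t))).
    { apply Rmult_le_pos. apply Rmult_le_pos; lra. nra. }
    replace (1 - (N + 2) * (t * T) + (N + 1) * (t * t * T)) with
      ((1 - (N + 1) * T + N * (t * T)) + (N + 1) * T * ((1 - t) * (1 - t))) by ring.
    change (t ^ (k + 1)) with T in IHk. change (INR (k + 1)) with N in IHk. lra.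
Qed.

Lemma psi_pos t k : 0 < t -> t <> 1 ->
  0 < INR (k + 1) - INR (k + 2) * t + t ^ (k + 2).
Proof.
  intros H0 H1. induction k.
  - simpl. assert (0 < (1 - t) * (1 - t)).
    { apply Rsqr_pos_lt. lra. }
    nra.
  - set (N := INR (k + 1)).
    assert (E2 : t ^ (S k + 2) = t * t ^ (k + 2)) by (replace (S k + 2)%nat with (S (k + 2)) by lia; reflexivity).
    assert (E4 : INR (S k + 2) = N + 2) by (unfold N; replace (S k + 2)%nat with (S (S (k + 1))) by lia; rewrite !S_INR; ring).
    assert (E5 : INR (S k + 1) = N + 1) by (unfold N; replace (S k + 1)%nat with (S (k + 1)) by lia; rewrite !S_INR; ring).
    assert (E6 : INR (k + 2) = N + 1) by (unfold N; replace (k + 2)%nat with (S (k + 1)) by lia; rewrite !S_INR; ring).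
    rewrite E2, E4, E5. rewrite E6 in IHk.
    pose proof (sgn_pow_le t (k + 2) H0).
    change (INR (k + 1)) with N in IHk.
    replace (N + 1 - (N + 2) * t + t * t ^ (k + 2)) with
      ((N - (N + 1) * t + t ^ (k + 2)) + (1 - t) * (1 - t ^ (k + 2))) by ring.
    lra.
Qed.

Lemma unimodal (h h' : R -> R) (lo hi cs : R) :
  0 < lo -> lo < hi -> (forall c, is_derive h c (h' c)) ->
  (forall c, 0 < c < cs -> 0 < h' c) -> (forall c, 0 < c -> c <= cs -> 0 <= h' c) ->
  (forall c, cs < c -> h' c < 0) ->
  h lo = 0 -> h hi = 0 -> forall y, lo < y < hi -> 0 < h y.
Proof.
  intros Hlo Hlh Hd Hp Hp' Hn Hl Hh y Hy.
  assert (Hc : forall c, continuity_pt h c).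
  { intros c. apply dpl_cont with (h' c). apply is_derive_Reals, Hd. }
  assert (M : forall a b, a < b -> exists c, a <= c <= b /\ h b - h a = h' c * (b - a)).
  { intros a b Hab. destruct (MVT_gen h a b h') as [c [Hc1 E]].
    intros; apply Hd. intros; apply Hc.
    rewrite Rmin_left, Rmax_right in Hc1 by lra. exists c; auto. }
  destruct (Rle_dec y cs) as [Hy1|Hy1].
  - set (p := (lo + y) / 2).
    destruct (M lo p) as [c1 [Hc1 E1]]. unfold p; lra.
    destruct (M p y) as [c2 [Hc2 E2]]. unfold p; lra.
    assert (0 < h' c1) by (apply Hp; unfold p in *; lra).
    assert (0 <= h' c2) by (apply Hp'; unfold p in *; lra).
    assert (0 < h' c1 * (p - lo)) by (apply Rmult_lt_0_compat; unfold p; lra).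
    assert (0 <= h' c2 * (y - p)) by (apply Rmult_le_pos; unfold p in *; lra).
    lra.
  - set (q := (y + hi) / 2).
    destruct (M q hi) as [c1 [Hc1 E1]]. unfold q; lra.
    destruct (M y q) as [c2 [Hc2 E2]]. unfold q; lra.
    assert (h' c1 < 0) by (apply Hn; unfold q in *; lra).
    assert (h' c2 < 0) by (apply Hn; unfold q in *; lra).
    assert (0 < - h' c1 * (hi - q)) by (apply Rmult_lt_0_compat; unfold q; lra).
    assert (0 < - h' c2 * (q - y)) by (apply Rmult_lt_0_compat; unfold q; lra).
    lra.
Qed.


Definition Yv t x := 1 - (1 - t) * x.
Definition Qm m t := Qf (S (S m)) t.
Definition Dv m t x := 1 - Qm m t + Qm m t * Yv t x ^ (S (S m)).
Definition Wv m t x := Yv t x ^ (S m) / Dv m t x.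
Definition Fg m t x := (Wv m t x ^ 2 - 1) / (1 - t) ^ 2.
Definition Wp m t x := (INR (S m) * Yv t x ^ m * (-(1-t)) * Dv m t x
   - Yv t x ^ (S m) * (Qm m t * INR (S (S m)) * Yv t x ^ (S m) * (-(1-t)))) / Dv m t x ^ 2.
Definition Fgp m t x := 2 * Wv m t x * Wp m t x / (1 - t) ^ 2.

Section Spec.
Variable m : nat.
Variable t : R.
Hypothesis Ht : 0 < t.
Hypothesis Ht1 : t <> 1.

Lemma Qm_eq : Qm m t = (1 - t ^ (S m)) / (1 - t ^ (S (S m))).
Proof.
  unfold Qm, Qf. destruct Req_EM_T; [contradiction|].
  replace (S (S m) - 1)%nat with (S m) by lia. reflexivity.
Qed.

Lemma den_ne k : 1 - t ^ (S k) <> 0.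
Proof. pose proof (sgn_pow t k Ht Ht1). intros E; rewrite E in H; lra. Qed.

Lemma Qm_pos : 0 < Qm m t < 1.
Proof.
  rewrite Qm_eq. pose proof (sgn_pow t m Ht Ht1). pose proof (sgn_pow t (S m) Ht Ht1).
  pose proof (den_ne (S m)).
  assert (E : (1 - t ^ S m) / (1 - t ^ S (S m)) =
    ((1 - t) * (1 - t ^ S m)) / ((1 - t) * (1 - t ^ S (S m)))) by (field; split; lra).
  rewrite E. split.
  - apply Rdiv_lt_0_compat; auto.
  - apply Rmult_lt_reg_r with ((1 - t) * (1 - t ^ S (S m))); auto.
    field_simplify; [|lra]. rewrite <- !tech_pow_Rmult.
    pose proof (pow_pos' t m Ht).
    assert (0 < t * t ^ m * ((1 - t) * (1 - t))).
    { apply Rmult_lt_0_compat. nra. apply Rsqr_pos_lt; lra. }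
    nra.
Qed.

Lemma Yv_pos x : 0 <= x <= 1 -> 0 < Yv t x.
Proof. intros; unfold Yv. nra. Qed.

Lemma Dv_pos x : 0 <= x <= 1 -> 0 < Dv m t x.
Proof.
  intros Hx. unfold Dv. pose proof Qm_pos. pose proof (pow_pos' _ (S (S m)) (Yv_pos x Hx)).
  nra.
Qed.

Lemma Fg_deriv x : 0 <= x <= 1 -> derivable_pt_lim (Fg m t) x (Fgp m t x).
Proof.
  intros Hx. apply is_derive_Reals. pose proof (Dv_pos x Hx) as HD.
  assert (Ha : 1 - t <> 0) by lra.
  unfold Fg, Fgp, Wp, Wv. unfold Dv, Yv in *. auto_derive.
  - replace (1 + - ((1 - t) * x)) with (1 - (1 - t) * x) by ring. simpl pow in HD. lra.
  - change (match m with 0%nat => 1 | S _ => INR m + 1 end) with (INR (S m)).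
    change (match m with 0%nat => 1 | S _ => INR m + 1 end + 1) with (INR (S (S m))).
    simpl pow. replace (1 + - ((1 - t) * x)) with (1 - (1 - t) * x) by ring. rewrite (S_INR (S m)). simpl pow in HD. field. split; lra.
Qed.

Lemma Yv_0 : Yv t 0 = 1.
Proof. unfold Yv; ring. Qed.
Lemma Yv_1 : Yv t 1 = t.
Proof. unfold Yv; ring. Qed.

Lemma Dv_0 : Dv m t 0 = 1.
Proof. unfold Dv; rewrite Yv_0, pow1; ring. Qed.

Lemma Dv_1 : Dv m t 1 = t ^ (S m).
Proof.
  unfold Dv; rewrite Yv_1, Qm_eq. pose proof (den_ne (S m)). field; auto.
Qed.

Lemma Wv_0 : Wv m t 0 = 1.
Proof. unfold Wv; rewrite Dv_0, Yv_0, pow1; field. Qed.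

Lemma Wv_1 : Wv m t 1 = 1.
Proof.
  unfold Wv; rewrite Dv_1, Yv_1. pose proof (pow_pos' t (S m) Ht). field; lra.
Qed.

Lemma Fg_0 : Fg m t 0 = 0.
Proof. unfold Fg; rewrite Wv_0. field. lra. Qed.

Lemma Fg_1 : Fg m t 1 = 0.
Proof. unfold Fg; rewrite Wv_1. field. lra. Qed.

Lemma Fgp_0 : 0 < Fgp m t 0.
Proof.
  assert (Hphi := phi_pos t m Ht Ht1).
  replace (m + 2)%nat with (S (S m)) in Hphi by lia.
  replace (m + 1)%nat with (S m) in Hphi by lia.
  assert (E : Fgp m t 0 = 2 * (1 - INR (S (S m)) * t ^ S m + INR (S m) * t ^ S (S m))
     / ((1 - t) * (1 - t ^ (S (S m))))).
  { unfold Fgp, Wp. rewrite Wv_0, Dv_0, Yv_0, !pow1, Qm_eq, (S_INR (S m)).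
    pose proof (den_ne (S m)). field. split; lra. }
  rewrite E. apply Rdiv_lt_0_compat. lra. apply sgn_pow; auto.
Qed.

Lemma Fgp_1 : Fgp m t 1 < 0.
Proof.
  assert (Hpsi := psi_pos t m Ht Ht1).
  replace (m + 2)%nat with (S (S m)) in Hpsi by lia.
  replace (m + 1)%nat with (S m) in Hpsi by lia.
  assert (E : Fgp m t 1 = - (2 * (INR (S m) - INR (S (S m)) * t + t ^ S (S m))
     / (t * ((1 - t) * (1 - t ^ (S (S m))))))).
  { unfold Fgp, Wp. rewrite Wv_1, Dv_1, Yv_1, Qm_eq, (S_INR (S m)).
    pose proof (den_ne (S m)) as H1. pose proof (pow_pos' t m Ht) as H2.
    rewrite <- !tech_pow_Rmult in *.
    field. repeat split; lra. }
  rewrite E. apply Ropp_lt_gt_0_contravar. apply Rdiv_lt_0_compat. lra.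
  apply Rmult_lt_0_compat; auto. apply sgn_pow; auto.
Qed.

Lemma Fg_pos x : 0 < x < 1 -> 0 < Fg m t x.
Proof.
  intros Hx. pose proof Qm_pos as HQ.
  set (Q := Qm m t) in *.
  set (h := fun c => c ^ (S m) - (1 - Q + Q * c ^ (S (S m)))).
  set (h' := fun c => INR (S m) * c ^ m - Q * INR (S (S m)) * c ^ (S m)).
  set (cs := INR (S m) / (Q * INR (S (S m)))).
  assert (HN1 : 0 < INR (S m)) by (apply lt_0_INR; lia).
  assert (HN2 : 0 < INR (S (S m))) by (apply lt_0_INR; lia).
  assert (Hh' : forall c, h' c = c ^ m * (INR (S m) - Q * INR (S (S m)) * c)).
  { intros c; unfold h'; simpl pow; ring. }
  assert (Hy : 0 < h (Yv t x)).
  { apply (unimodal h h' (Rmin t 1) (Rmax t 1) cs).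
    - apply Rmin_pos; lra.
    - unfold Rmin, Rmax; destruct Rle_dec; lra.
    - intros c. unfold h, h'. auto_derive; auto.
      change (match m with 0%nat => 1 | S _ => INR m + 1 end) with (INR (S m)).
      change (match m with 0%nat => 1 | S _ => INR m + 1 end + 1) with (INR (S (S m))).
      simpl pow. rewrite (S_INR (S m)). ring.
    - intros c Hc. rewrite Hh'. apply Rmult_lt_0_compat. apply pow_pos'; lra.
      assert (Q * INR (S (S m)) * c < Q * INR (S (S m)) * cs).
      { apply Rmult_lt_compat_l. apply Rmult_lt_0_compat; lra. lra. }
      unfold cs in H. field_simplify in H; [lra|]. split; lra.
    - intros c Hc Hc2. rewrite Hh'. apply Rmult_le_pos. apply Rlt_le, pow_pos'; lra.
      assert (Q * INR (S (S m)) * c <= Q * INR (S (S m)) * cs).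
      { apply Rmult_le_compat_l. apply Rlt_le, Rmult_lt_0_compat; lra. lra. }
      unfold cs in H. field_simplify in H; [lra|]. split; lra.
    - intros c Hc. rewrite Hh'.
      assert (0 < c) by (assert (0 < cs) by (unfold cs; apply Rdiv_lt_0_compat; nra); lra).
      assert (Q * INR (S (S m)) * cs < Q * INR (S (S m)) * c).
      { apply Rmult_lt_compat_l. apply Rmult_lt_0_compat; lra. lra. }
      unfold cs in H0. field_simplify in H0; [|split; lra].
      pose proof (pow_pos' c m H).
      assert (0 < c ^ m * (Q * INR (S (S m)) * c - INR (S m))) by (apply Rmult_lt_0_compat; lra).
      nra.
    - unfold Rmin; destruct Rle_dec.
      + unfold h. pose proof Dv_1 as E. unfold Dv in E. rewrite Yv_1 in E. fold Q in E.
        rewrite E. ring.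
      + unfold h. rewrite !pow1. ring.
    - unfold Rmax; destruct Rle_dec.
      + unfold h. rewrite !pow1. ring.
      + unfold h. pose proof Dv_1 as E. unfold Dv in E. rewrite Yv_1 in E. fold Q in E.
        rewrite E. ring.
    - unfold Yv, Rmin, Rmax; destruct Rle_dec; destruct (Rlt_dec t 1); nra. }
  unfold h in Hy.
  assert (HD := Dv_pos x ltac:(lra)).
  assert (HW : 1 < Wv m t x).
  { unfold Wv. apply Rmult_lt_reg_r with (Dv m t x); auto.
    field_simplify; [|lra]. unfold Dv. fold Q. lra. }
  unfold Fg. apply Rdiv_lt_0_compat. nra.
  replace ((1 - t) ^ 2) with ((1 - t) * (1 - t)) by ring. apply Rsqr_pos_lt; lra.
Qed.


Lemma Rprof_eq x : Rprof (S (S m)) x t = sqrt (Fg m t x).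
Proof.
  unfold Rprof. destruct Req_EM_T; [contradiction|].
  replace (S (S m) - 1)%nat with (S m) by lia.
  unfold Fg, Wv, Dv, Yv, Qm.
  assert (0 < (1 - t) ^ 2).
  { replace ((1 - t) ^ 2) with ((1 - t) * (1 - t)) by ring. apply Rsqr_pos_lt; lra. }
  rewrite sqrt_div_alt by auto.
  rewrite <- (Rsqr_pow2 (1 - t)), sqrt_Rsqr_abs. unfold Rdiv. ring.
Qed.

Lemma Fgp_cont x : 0 <= x <= 1 -> continuity_pt (Fgp m t) x.
Proof.
  intros Hx. pose proof (Dv_pos x Hx) as HD. assert (Ha : 1 - t <> 0) by lra.
  apply cpf. apply (ex_derive_continuous (K := R_AbsRing) (V := R_NormedModule)).
  unfold Fgp, Wp, Wv. unfold Dv, Yv in *. simpl pow in HD.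
  auto_derive; replace (1 + - ((1 - t) * x)) with (1 - (1 - t) * x) by ring;
  repeat split; try lra; rewrite Rmult_1_r; apply Rmult_integral_contrapositive; split; lra.
Qed.

Lemma Fg_nonneg x : 0 <= x <= 1 -> 0 <= Fg m t x.
Proof.
  intros Hx. destruct (Req_dec x 0) as [->|H0]. rewrite Fg_0; lra.
  destruct (Req_dec x 1) as [->|H1]. rewrite Fg_1; lra.
  apply Rlt_le, Fg_pos; lra.
Qed.

Lemma Wv_pos x : 0 <= x <= 1 -> 0 < Wv m t x.
Proof.
  intros Hx. unfold Wv. apply Rdiv_lt_0_compat. apply pow_pos', Yv_pos; auto.
  apply Dv_pos; auto.
Qed.

End Spec.


Definition F1f (m : nat) (x : R) := INR (S m) * (1 - x) * x.
Definition F1p (m : nat) (x : R) := INR (S m) * (1 - 2 * x).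

Definition FF m t := if Req_EM_T t 1 then F1f m else Fg m t.
Definition FFp m t := if Req_EM_T t 1 then F1p m else Fgp m t.

Record good (F F' : R -> R) : Prop := {
  g_HF : forall x, 0 <= x <= 1 -> derivable_pt_lim F x (F' x);
  g_F0 : F 0 = 0; g_F1 : F 1 = 0; g_D0 : 0 < F' 0; g_D1 : F' 1 < 0;
  g_pos : forall x, 0 < x < 1 -> 0 < F x }.

Lemma FF_good m t : 0 < t -> good (FF m t) (FFp m t).
Proof.
  intros Ht. unfold FF, FFp. destruct Req_EM_T as [E|E].
  - assert (0 < INR (S m)) by (apply lt_0_INR; lia).
    constructor; unfold F1f, F1p.
    + intros x _. apply is_derive_Reals. auto_derive; auto. change (match m with 0%nat => 1 | S _ => INR m + 1 end) with (INR (S m)). ring.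
    + ring. + ring. + lra. + lra.
    + intros x Hx. apply Rmult_lt_0_compat; [|lra]. apply Rmult_lt_0_compat; lra.
  - constructor.
    + apply Fg_deriv; auto.
    + apply Fg_0; auto. + apply Fg_1; auto. + apply Fgp_0; auto. + apply Fgp_1; auto.
    + apply Fg_pos; auto.
Qed.

Lemma FF_R m t x : 0 < t -> Rprof (S (S m)) x t = sqrt (FF m t x).
Proof.
  intros Ht. unfold FF. destruct Req_EM_T as [E|E].
  - subst. unfold Rprof. destruct Req_EM_T; [|lra].
    replace (S (S m) - 1)%nat with (S m) by lia. reflexivity.
  - apply Rprof_eq; auto.
Qed.

Lemma zeta_FF m t x : 0 < t -> 0 <= x <= 1 ->
  zeta (S (S m)) x t = Zf (FF m t) (FFp m t) x.
Proof.
  intros Ht Hx. destruct (FF_good m t Ht).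
  apply (zeta_eq (FF m t) (FFp m t)); auto.
  intros; apply FF_R; auto.
Qed.

Lemma Pf_pos m t : 0 < t -> 0 < Pf (S (S m)) t.
Proof.
  intros Ht. unfold Pf. rewrite zeta_FF by (auto; lra).
  destruct (FF_good m t Ht). apply Zf_0_pos; auto.
Qed.

Lemma Qf_pos m t : 0 < t -> 0 < Qf (S (S m)) t.
Proof.
  intros Ht. destruct (Req_dec t 1) as [E|E].
  - subst. unfold Qf. destruct Req_EM_T; [|lra].
    apply Rdiv_lt_0_compat; apply lt_0_INR; lia.
  - apply (Qm_pos m t); auto.
Qed.


Lemma dpl_ext f g x l : (forall y, f y = g y) -> derivable_pt_lim g x l -> derivable_pt_lim f x l.
Proof.
  intros E H. replace f with g; auto. apply functional_extensionality; intros; auto.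
Qed.

Lemma cw_ext a b f g x : (forall y, f y = g y) -> cw a b g x -> cw a b f x.
Proof.
  intros E H. replace f with g; auto. apply functional_extensionality; intros; auto.
Qed.

Lemma dw_ext a b f g l x : (forall y, f y = g y) -> deriv_within a b g l x -> deriv_within a b f l x.
Proof.
  intros E H. replace f with g; auto. apply functional_extensionality; intros; auto.
Qed.

Lemma case_r (m : nat) (d r t : R) : 0 < d -> 0 < r -> 0 < t -> r <> 1 ->
  let n := S (S m) in
  let L := Qf n r * Pf n r * d / (Qf n t * Pf n t) in
  exists u1 u2 : R -> R,
    (forall z, 0 <= z <= L ->
       0 < u n d z r t /\
       deriv_within 0 L (fun w => u n d w r t) (u1 z) z /\
       deriv_within 0 L u1 (u2 z) z /\
       Hcurv n (u n d z r t) (u1 z) (u2 z) = eta n d t) /\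
    u1 0 = 0 /\ u1 L = 0.
Proof.
  intros Hd Hr Ht Hr1 n L.
  pose proof (Pf_pos m t Ht) as HPt. pose proof (Qf_pos m t Ht) as HQt.
  pose proof (Qf_pos m r Hr) as HQr.
  change (0 < Pf n t) in HPt. change (0 < Qf n t) in HQt. change (0 < Qf n r) in HQr.
  set (F := Fg m r). set (F' := Fgp m r).
  assert (HF : forall x, 0 <= x <= 1 -> derivable_pt_lim F x (F' x)) by (intros; apply Fg_deriv; auto).
  assert (F0 : F 0 = 0) by (apply Fg_0; auto).
  assert (F1 : F 1 = 0) by (apply Fg_1; auto).
  assert (D0 : 0 < F' 0) by (apply Fgp_0; auto).
  assert (D1 : F' 1 < 0) by (apply Fgp_1; auto).
  assert (Fpos : forall x, 0 < x < 1 -> 0 < F x) by (intros; apply Fg_pos; auto).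
  set (Z := Zf F F').
  assert (Zc := Zf_cont F F' HF F0 F1 D0 D1 Fpos).
  assert (Zlt := Zf_lt F F' HF F0 F1 D0 D1 Fpos).
  assert (Zd := Zf_deriv F F' HF F0 F1 D0 D1 Fpos).
  assert (Z1 := Zf_1 F F').
  assert (EZ : forall x, 0 <= x <= 1 -> zeta n x r = Z x).
  { apply (zeta_eq F F' HF F0 F1 D0 D1 Fpos). intros; apply Rprof_eq; auto. }
  set (P := Pf n r).
  assert (HP : P = Z 0) by (unfold P, Pf; apply EZ; lra).
  assert (HPpos : 0 < P) by (rewrite HP; apply Zf_0_pos; auto).
  set (X := fun s => zeta_inv n s r).
  assert (HX : forall s, 0 <= s <= P -> 0 <= X s <= 1 /\ Z (X s) = s).
  { intros s Hs. rewrite HP in Hs.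
    destruct (Z_surj Z Zc Z1 ltac:(lra) s Hs) as [x [Hx Ex]].
    assert (Hex : exists x, 0 <= x <= 1 /\ zeta n x r = s).
    { exists x. split; auto. rewrite EZ; auto. }
    destruct (epsilon_spec (inhabits 0) _ Hex) as [H1 H2].
    unfold X, zeta_inv. split; auto. rewrite <- EZ; auto. }
  assert (Xcw := X_cw Z X P Zlt HX).
  assert (X0 := X_0 Z X P Zlt Z1 HP HX).
  assert (XP := X_P Z X P Zlt Z1 HP HX).
  assert (Xint := X_int Z X P Z1 HP HX).
  assert (Xd : forall s, 0 < s < P -> derivable_pt_lim X s (- sqrt (F (X s)))).
  { intros s Hs. destruct (Xint s Hs) as [H1 H2].
    assert (HFs : 0 < F (X s)) by (apply Fpos; lra).
    assert (0 < sqrt (F (X s))) by (apply sqrt_lt_R0; lra).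
    replace (- sqrt (F (X s))) with (/ (- / sqrt (F (X s)))).
    2:{ field. lra. }
    apply (X_deriv Z X P Zlt HX s); [auto | apply Zd; lra | ].
    assert (0 < / sqrt (F (X s))) by (apply Rinv_0_lt_compat; lra). lra. }
  set (Qr := Qf n r) in *. set (Qt := Qf n t) in *. set (Pt := Pf n t) in *.
  set (c := Qr * d / (Pt * Qt)). set (k := Qt * Pt / (Qr * d)).
  assert (Hc : 0 < c) by (unfold c; apply Rdiv_lt_0_compat; apply Rmult_lt_0_compat; lra).
  assert (Hk : 0 < k) by (unfold k; apply Rdiv_lt_0_compat; apply Rmult_lt_0_compat; lra).
  assert (Hck : c * k = 1) by (unfold c, k; field; repeat split; lra).
  assert (HL : L = P / k) by (unfold L, k, P, Qr, Qt, Pt in *; field; repeat split; lra).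
  assert (HLpos : 0 < L) by (rewrite HL; apply Rdiv_lt_0_compat; lra).
  set (a := 1 - r).
  assert (Eu : forall w, u n d w r t = c * (1 - a * X (k * w))).
  { intros w. unfold u. fold Qr Qt Pt.
    replace (Qt * Pt * w / (Qr * d)) with (k * w) by (unfold k; field; split; lra).
    reflexivity. }
  assert (Hrange : forall z, 0 <= z <= L -> 0 <= k * z <= P).
  { intros z Hz. rewrite HL in Hz. destruct Hz as [Hz1 Hz2]. split. nra.
    apply (Rmult_le_compat_l k) in Hz2; [|lra]. field_simplify in Hz2; lra. }
  assert (Hrange' : forall z, 0 < z < L -> 0 < k * z < P).
  { intros z Hz. rewrite HL in Hz. destruct Hz as [Hz1 Hz2]. split. nra.
    apply (Rmult_lt_compat_l k) in Hz2; [|lra]. field_simplify in Hz2; lra. }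
  set (u1 := fun z => a * sqrt (F (X (k * z)))).
  set (u2 := fun z => - a * F' (X (k * z)) * k / 2).
  exists u1, u2.
  assert (Xkcw : forall z, 0 <= z <= L -> cw 0 L (fun w => X (k * w)) z).
  { intros z Hz. apply (cw_lin 0 P 0 L X k z Hk). field; lra. exact HL. apply Xcw, Hrange; auto. }
  assert (Xkd : forall z, 0 < z < L ->
     derivable_pt_lim (fun w => X (k * w)) z (- sqrt (F (X (k * z))) * k)).
  { intros z Hz. apply (derivable_pt_lim_comp (fun w => k * w) X z k).
    apply is_derive_Reals. auto_derive; auto. ring.
    apply Xd, Hrange'; auto. }
  assert (Xk01 : forall z, 0 <= z <= L -> 0 <= X (k * z) <= 1).
  { intros z Hz. apply HX, Hrange; auto. }
  assert (Fcont : forall y, 0 <= y <= 1 -> continuity_pt F y).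
  { intros y Hy. apply dpl_cont with (F' y). auto. }
  assert (Du : forall z, 0 < z < L -> derivable_pt_lim (fun w => u n d w r t) z (u1 z)).
  { intros z Hz. apply dpl_ext with (comp (fun y => c * (1 - a * y)) (fun w => X (k * w))).
    { intros; unfold comp; apply Eu. }
    replace (u1 z) with ((- (c * a)) * (- sqrt (F (X (k * z))) * k)).
    2:{ unfold u1. replace (- (c * a) * (- sqrt (F (X (k * z))) * k)) with
        ((c * k) * a * sqrt (F (X (k * z)))) by ring. rewrite Hck; ring. }
    apply derivable_pt_lim_comp. apply Xkd; auto.
    apply is_derive_Reals. auto_derive; auto. ring. }
  assert (Du1 : forall z, 0 < z < L -> derivable_pt_lim u1 z (u2 z)).
  { intros z Hz.
    pose proof (Xint _ (Hrange' z Hz)) as Hx.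
    assert (HFx : 0 < F (X (k * z))) by (apply Fpos; auto).
    assert (Hsq : 0 < sqrt (F (X (k * z)))) by (apply sqrt_lt_R0; auto).
    apply dpl_ext with (comp (mult_real_fct a (comp sqrt F)) (fun w => X (k * w))).
    { intros; unfold comp, mult_real_fct, u1; auto. }
    replace (u2 z) with ((a * (/ (2 * sqrt (F (X (k * z)))) * F' (X (k * z)))) *
       (- sqrt (F (X (k * z))) * k)).
    2:{ unfold u2. field. lra. }
    apply derivable_pt_lim_comp. apply Xkd; auto.
    apply derivable_pt_lim_scal. apply derivable_pt_lim_comp.
    apply HF; lra. apply derivable_pt_lim_sqrt; auto. }
  assert (Ucw : forall z, 0 <= z <= L -> cw 0 L (fun w => u n d w r t) z).
  { intros z Hz. apply cw_ext with (fun w => c * (1 - a * X (k * w))); auto.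
    apply (cw_comp_cont 0 L (fun w => X (k * w)) (fun y => c * (1 - a * y))); auto.
    apply dpl_cont with (- (c * a)). apply is_derive_Reals. auto_derive; auto. ring. }
  assert (U1cw : forall z, 0 <= z <= L -> cw 0 L u1 z).
  { intros z Hz. apply cw_ext with (fun w => mult_real_fct a (comp sqrt F) (X (k * w))).
    { intros; unfold u1, mult_real_fct, comp; auto. }
    apply (cw_comp_cont 0 L (fun w => X (k * w)) (mult_real_fct a (comp sqrt F))); auto.
    apply continuity_pt_scal. apply continuity_pt_comp. apply Fcont; auto.
    apply continuity_pt_sqrt. destruct (Xk01 z Hz). apply Fg_nonneg; auto. }
  assert (U2cw : forall z, 0 <= z <= L -> cw 0 L u2 z).
  { intros z Hz. apply cw_ext with (fun w => mult_real_fct (- a * k / 2) F' (X (k * w))).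
    { intros; unfold u2, mult_real_fct; field. }
    apply (cw_comp_cont 0 L (fun w => X (k * w)) (mult_real_fct (- a * k / 2) F')); auto.
    apply continuity_pt_scal. apply Fgp_cont; auto. }
  split; [|split].
  - intros z Hz. split; [|split; [|split]].
    + rewrite Eu. apply Rmult_lt_0_compat; auto.
      pose proof (Yv_pos r Hr Hr1 (X (k * z)) (Xk01 z Hz)). unfold Yv in H. unfold a. lra.
    + apply (ext_deriv 0 L _ u1); auto.
    + apply (ext_deriv 0 L _ u2); auto.
    + rewrite Eu. unfold u1, u2.
      pose proof (Xk01 z Hz) as Hx.
      set (x := X (k * z)) in *.
      assert (HFx : 0 <= F x) by (apply Fg_nonneg; auto).
      pose proof (Wv_pos m r Hr Hr1 x Hx) as HW.
      pose proof (Dv_pos m r Hr Hr1 x Hx) as HDv.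
      pose proof (Yv_pos r Hr Hr1 x Hx) as HYv.
      assert (Ha : a <> 0) by (unfold a; lra).
      assert (E1 : 1 + (a * sqrt (F x)) ^ 2 = Wv m r x ^ 2).
      { rewrite Rpow_mult_distr, pow2_sqrt by auto. unfold F, Fg. fold a. field. auto. }
      unfold Hcurv. rewrite E1, sqrt_pow2 by lra.
      unfold eta. change (INR (n - 1)) with (INR (S m)). change (INR n) with (INR (S (S m))).
      unfold F', Fgp, Wp. fold a.
      unfold Wv, Dv in *. unfold Yv in *. unfold Qm in *.
      unfold c, k, Qr, Qt, Pt in *.
      set (y := 1 - a * x) in *.
      assert (Ey : 1 - (1 - r) * x = y) by (unfold y, a; ring).
      rewrite Ey in *.
      set (Q := Qf n r) in *.
      assert (HY : 0 < y ^ m) by (apply pow_pos'; auto).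
      simpl pow in *. rewrite (S_INR (S m)).
      change (Qf (S (S m)) r) with Q in *. field. repeat split; lra.
  - unfold u1. rewrite Rmult_0_r, X0, F1, sqrt_0. ring.
  - unfold u1. replace (k * L) with P by (rewrite HL; field; lra).
    rewrite XP, F0, sqrt_0. ring.
Qed.


Lemma deriv_const a b g c x : (forall w, g w = c) -> deriv_within a b g 0 x.
Proof.
  intros H eps Heps. exists 1; split; [lra|]. intros h Hh _ _. rewrite !H.
  replace ((c - c) / h - 0) with 0 by (field; auto). rewrite Rabs_R0; auto.
Qed.

Lemma case_1 (m : nat) (d t : R) : 0 < d -> 0 < t ->
  let n := S (S m) in
  let L := Qf n 1 * Pf n 1 * d / (Qf n t * Pf n t) in
  exists u1 u2 : R -> R,
    (forall z, 0 <= z <= L ->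
       0 < u n d z 1 t /\
       deriv_within 0 L (fun w => u n d w 1 t) (u1 z) z /\
       deriv_within 0 L u1 (u2 z) z /\
       Hcurv n (u n d z 1 t) (u1 z) (u2 z) = eta n d t) /\
    u1 0 = 0 /\ u1 L = 0.
Proof.
  intros Hd Ht n L.
  pose proof (Pf_pos m t Ht) as HPt. pose proof (Qf_pos m t Ht) as HQt.
  change (0 < Pf n t) in HPt. change (0 < Qf n t) in HQt.
  assert (EQ1 : Qf n 1 = INR (S m) / INR (S (S m))).
  { unfold Qf. destruct Req_EM_T; [|lra]. reflexivity. }
  assert (H1 : 0 < INR (S m)) by (apply lt_0_INR; lia).
  assert (H2 : 0 < INR (S (S m))) by (apply lt_0_INR; lia).
  set (c := Qf n 1 * d / (Pf n t * Qf n t)).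
  assert (Hc : 0 < c).
  { unfold c. rewrite EQ1. apply Rdiv_lt_0_compat. apply Rmult_lt_0_compat; auto.
    apply Rdiv_lt_0_compat; auto. apply Rmult_lt_0_compat; auto. }
  assert (Eu : forall w, u n d w 1 t = c).
  { intros w. unfold u. fold c. ring. }
  exists (fun _ => 0), (fun _ => 0).
  split; [|split; reflexivity].
  intros z Hz. split; [rewrite Eu; auto|]. split.
  apply deriv_const with c; auto. split. apply deriv_const with 0; auto.
  rewrite Eu. unfold Hcurv, eta.
  change (INR (n - 1)) with (INR (S m)). change (INR n) with (INR (S (S m))).
  replace (1 + 0 ^ 2) with 1 by ring. rewrite sqrt_1.
  unfold c. rewrite EQ1. field. repeat split; lra.
Qed.

Theorem proposition2p1 (n : nat) (d r t : R) :
  (2 <= n)%nat -> 0 < d -> 0 < r -> 0 < t ->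
  let L := Qf n r * Pf n r * d / (Qf n t * Pf n t) in
  exists u1 u2 : R -> R,
    (forall z, 0 <= z <= L ->
       0 < u n d z r t /\
       deriv_within 0 L (fun w => u n d w r t) (u1 z) z /\
       deriv_within 0 L u1 (u2 z) z /\
       Hcurv n (u n d z r t) (u1 z) (u2 z) = eta n d t) /\
    u1 0 = 0 /\ u1 L = 0.
Proof.
  intros Hn Hd Hr Ht.
  destruct n as [|[|m]]; [lia|lia|].
  destruct (Req_dec r 1) as [->|Hr1].
  - apply case_1; auto.
  - apply case_r; auto.
Qed.
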